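(* Let $n\geqslant m\geqslant2$ with $n+m$ even. Then $\mathrm{SR}(n,m)-\mathrm{DR}(n,m)=\left\lceil\frac{m}{2}\right\rceil$.
   Context: Let $p,q$ be distinct primes and $n,m$ positive integers. In $C_{p^nq^m}$ let $C_{p^aq^x}$ be the unique subgroup of order $p^aq^x$, and write $(a,x;b,y)$ for the pair of subgroups $(C_{p^aq^x},C_{p^bq^y})$ with $0\leqslant a\leqslant b\leqslant n$, $0\leqslant x\leqslant y\leqslant m$, $(a,x)\neq(b,y)$. Its midpoint is $(a+x+b+y)/2$, and $R_M$ is the set of all such pairs with midpoint $M$. The simple rainbow number $\mathrm{SR}(n,m)$ is $|R_{(n+m)/2}|$ if $n+m$ is odd, and $|R_{(n+m-1)/2}|$ (which equals $|R_{(n+m+1)/2}|$) if $n+m$ is even. For $n,m\geqslant2$ with $n+m$ even, the double rainbow number is $\mathrm{DR}(n,m)=|R_{(n+m)/2}|$. *)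

(* Defs.v *)
From mathcomp Require Import all_boot.
Set Implicit Arguments. Unset Strict Implicit. Unset Printing Implicit Defensive.

(* The subgroup C_{p^a q^x} of C_{p^n q^m} is identified with the exponent
   pair (a, x) : 'I_n.+1 * 'I_m.+1 (bijective correspondence).
   A pair (a,x;b,y) is encoded as ((a,x),(b,y)).
   Midpoints may be half-integers, so we index R by the DOUBLED midpoint
   s = 2M = a + x + b + y. *)
Definition subgrp (n m : nat) := ('I_n.+1 * 'I_m.+1)%type.

Definition Rset (n m s : nat) : {set subgrp n m * subgrp n m} :=
  [set P : subgrp n m * subgrp n m |
     [&& (P.1.1 : nat) <= P.2.1, (P.1.2 : nat) <= P.2.2, P.1 != P.2 &
         (P.1.1 : nat) + P.1.2 + P.2.1 + P.2.2 == s]].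

Definition Rcard (n m s : nat) : nat := #|Rset n m s|.

Definition SR (n m : nat) : nat :=
  if odd (n + m) then Rcard n m (n + m) else Rcard n m (n + m - 1).

(* double rainbow number (meaningful for n,m >= 2, n+m even): |R_{(n+m)/2}| *)
Definition DR (n m : nat) : nat := Rcard n m (n + m).

(* Main.v *)
Require Import Defs.
From mathcomp Require Import all_boot all_algebra.
From mathcomp Require Import zify.

Definition F n u := \sum_(a < n.+1) \sum_(b < n.+1) nat_of_bool ((a <= b) && (a + b == u)).
Definition Fc n u := if u <= n then u %/ 2 + 1 else if u <= 2 * n then (2 * n - u) %/ 2 + 1 else 0.

Lemma sum_eqc k c u : \sum_(a < k) nat_of_bool (a + c == u) = nat_of_bool ((c <= u) && (u < c + k)).
Proof. elim: k => [|k IH]; first by rewrite big_ord0; lia. rewrite big_ord_recr /= IH; lia. Qed.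

Lemma F_rec n u : F n.+1 u = F n u + nat_of_bool ((n < u) && (u <= 2 * n + 2)).
Proof.
rewrite /F big_ord_recr /=.
under eq_bigr => a _ do rewrite big_ord_recr /=.
rewrite big_split /=.
have -> : \sum_(i < n.+1) nat_of_bool ((i <= n.+1) && (i + n.+1 == u))
        = \sum_(i < n.+1) nat_of_bool (i + n.+1 == u).
  by apply: eq_bigr => i _; have := ltn_ord i; lia.
rewrite sum_eqc (big_ord_recr n.+1) /=.
have -> : \sum_(i < n.+1) nat_of_bool ((n.+1 <= i) && (n.+1 + i == u)) = 0.
  by rewrite big1 // => i _; have := ltn_ord i; lia.
lia.
Qed.

Lemma FE n u : F n u = Fc n u.
Proof.
elim: n u => [|n IH] u.
  rewrite /F !big_ord1 /Fc /=; repeat (case: ifP => ?); lia.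
rewrite F_rec IH /Fc; repeat (case: ifP => ?); lia.
Qed.

Definition c n m s := \sum_(u < s.+1) Fc n u * Fc m (s - u).
Definition N m t := \sum_(v < t.+1) Fc m v.

Lemma c_sym n m s : c n m s = c m n s.
Proof.
rewrite /c (reindex_inj rev_ord_inj) /=; apply: eq_bigr => i _.
have H := ltn_ord i; have -> : s.+1 - i.+1 = s - i by lia.
have -> : s - (s - i) = i by lia.
by rewrite mulnC.
Qed.

Lemma Fc_shift n i : i <= 2 * n + 2 -> Fc n.+2 i.+2 = Fc n i + 1.
Proof. move=> H; rewrite /Fc; repeat (case: ifP => ?); lia. Qed.

Lemma c_rec n m s : s <= 2 * n + 2 -> c n.+2 m s.+2 = c n m s + N m s.+2.
Proof.
move=> Hs.
have -> : N m s.+2 = \sum_(u < s.+3) Fc m (s.+2 - u).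
  rewrite /N (reindex_inj rev_ord_inj) /=; apply: eq_bigr => i _; congr Fc; have := ltn_ord i; lia.
rewrite /c (big_ord_recl s.+2) (big_ord_recl s.+1) (big_ord_recl s.+2) (big_ord_recl s.+1) /=.
have -> : \sum_(i < s.+1) Fc n.+2 (bump 0 (bump 0 i)) * Fc m (s.+2 - bump 0 (bump 0 i))
   = \sum_(i < s.+1) (Fc n i * Fc m (s - i) + Fc m (s - i)).
  apply: eq_bigr => i _; rewrite /bump /= !add1n subSS subSS Fc_shift; last by have := ltn_ord i; lia.
  by rewrite mulnDl mul1n.
rewrite big_split /=.
have -> : \sum_(i < s.+1) Fc m (s.+2 - bump 0 (bump 0 i)) = \sum_(i < s.+1) Fc m (s - i).
  by apply: eq_bigr => i _; rewrite /bump /= !add1n.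
have -> : Fc n.+2 0 = 1 by rewrite /Fc.
have -> : Fc n.+2 (bump 0 0) = 1 by rewrite /Fc.
lia.
Qed.

Lemma N_S m t : N m t.+1 = N m t + Fc m t.+1.
Proof. by rewrite /N big_ord_recr. Qed.

Lemma Fc_big m t : 2 * m < t -> Fc m t = 0.
Proof. move=> H; rewrite /Fc; repeat (case: ifP => ?); lia. Qed.

Lemma diag k : 1 <= k -> c k k (2 * k) = c k k (2 * k - 1) + k %/ 2 + 1.
Proof.
elim/ltn_ind: k => k IH Hk.
case: (ltnP k 3) => Hk3.
  case: k IH Hk Hk3 => [|[|[|k]]] _ Hk Hk3 //.
    rewrite /c; change (2*1-1) with 1; change (2*1) with 2; rewrite !big_ord_recr !big_ord0 /Fc; vm_compute; reflexivity.
  rewrite /c; change (2*2-1) with 3; change (2*2) with 4; rewrite !big_ord_recr !big_ord0 /Fc; vm_compute; reflexivity.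
have Hk2 : 1 <= k - 2 by lia.
have := IH (k - 2) ltac:(lia) Hk2.
set j := k - 2.
have -> : k = j.+2 by lia.
move=> IHj.
have -> : 2 * j.+2 = (2 * j + 2).+2 by lia.
have -> : (2 * j + 2).+2 - 1 = (2 * j + 1).+2 by lia.
rewrite !c_rec; try lia.
rewrite (c_sym j) (c_sym j).
have -> : 2 * j + 2 = (2 * j).+2 by lia.
have -> : 2 * j + 1 = (2 * j - 1).+2 by lia.
rewrite !c_rec; try lia.
have -> : (2 * j).+2.+2 = (2 * j + 3).+1 by lia.
have -> : (2 * j - 1).+2.+2 = (2 * j + 3) by lia.
have -> : (2 * j).+2 = (2 * j + 1).+1 by lia.
have -> : (2 * j - 1).+2 = (2 * j + 1) by lia.
rewrite (N_S j (2 * j + 1)) (N_S j.+2 (2 * j + 3)) (Fc_big j (2 * j + 1).+1); last by lia.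
have : Fc j.+2 (2 * j + 3).+1 = 1 by rewrite /Fc; repeat (case: ifP => ?); lia.
lia.
Qed.

Lemma offd m j : 1 <= m -> c (m + 2 * j) m (2 * m + 2 * j) = c (m + 2 * j) m (2 * m + 2 * j - 1) + m %/ 2 + 1.
Proof.
move=> Hm; elim: j => [|j IH]; first by rewrite !muln0 !addn0 diag.
have -> : m + 2 * j.+1 = (m + 2 * j).+2 by lia.
have -> : 2 * m + 2 * j.+1 = (2 * m + 2 * j).+2 by lia.
have -> : (2 * m + 2 * j).+2 - 1 = (2 * m + 2 * j - 1).+2 by lia.
rewrite !c_rec; try lia.
have -> : (2 * m + 2 * j - 1).+2 = (2 * m + 2 * j).+1 by lia.
rewrite (N_S m (2 * m + 2 * j).+1) (Fc_big m (2 * m + 2 * j).+2); last by lia.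
lia.
Qed.

Lemma part n s (h : nat -> nat) :
  \sum_(a < n.+1) \sum_(b < n.+1) nat_of_bool ((a <= b) && (a + b <= s)) * h (a + b)
  = \sum_(u < s.+1) F n u * h u.
Proof.
elim: s => [|s IH].
  rewrite big_ord1 /F big_distrl; apply: eq_bigr => a _; rewrite big_distrl; apply: eq_bigr => b _ /=.
  case: (boolP (a + b == 0)) => [/eqP E|E]; first by rewrite E.
  have -> : (a + b <= 0) = false by lia.
  by rewrite !andbF.
rewrite (big_ord_recr s.+1) /= -IH /F big_distrl -big_split; apply: eq_bigr => a _ /=.
rewrite big_distrl -big_split; apply: eq_bigr => b _ /=.
case: (boolP (a + b == s.+1)) => [/eqP E|E].
  by rewrite E leqnn ltnn !andbF andbT /=.
have -> : (a + b <= s.+1) = (a + b <= s) by lia.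
by rewrite !andbF addn0.
Qed.

Definition T4 n m s := \sum_(a < n.+1) \sum_(x < m.+1) \sum_(b < n.+1) \sum_(y < m.+1)
  nat_of_bool ((a <= b) && (x <= y) && (a + x + b + y == s)).
Definition dg n m s := \sum_(a < n.+1) \sum_(x < m.+1) nat_of_bool (a + x + a + x == s).

Lemma T4_c n m s : T4 n m s = c n m s.
Proof.
rewrite /T4.
under eq_bigr => a _ do rewrite exchange_big.
have -> : \sum_(a < n.+1) \sum_(b < n.+1) \sum_(x < m.+1) \sum_(y < m.+1)
   nat_of_bool ((a <= b) && (x <= y) && (a + x + b + y == s))
   = \sum_(a < n.+1) \sum_(b < n.+1) nat_of_bool ((a <= b) && (a + b <= s)) * (fun u => Fc m (s - u)) (a + b).
  apply: eq_bigr => a _; apply: eq_bigr => b _ /=.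
  rewrite -FE /F big_distrr; apply: eq_bigr => x _ /=.
  rewrite big_distrr; apply: eq_bigr => y _ /=; lia.
rewrite (part n s (fun u => Fc m (s - u))) /c; apply: eq_bigr => u _; by rewrite FE.
Qed.

Lemma card_R n m s : Rcard n m s + dg n m s = T4 n m s.
Proof.
have E1 : Rcard n m s = \sum_(p1 : subgrp n m) \sum_(p2 : subgrp n m)
   nat_of_bool ([&& (p1.1 : nat) <= p2.1, (p1.2 : nat) <= p2.2, p1 != p2 &
         (p1.1 : nat) + p1.2 + p2.1 + p2.2 == s]).
  rewrite pair_bigA /Rcard /Rset -sum1dep_card big_mkcond /=; apply: eq_bigr => P _; by case: ifP.
have E2 : dg n m s = \sum_(p1 : subgrp n m) \sum_(p2 : subgrp n m)
   nat_of_bool ((p1 == p2) && ((p1.1 : nat) + p1.2 + p2.1 + p2.2 == s)).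
  have -> : \sum_(p1 : subgrp n m) \sum_(p2 : subgrp n m)
   nat_of_bool ((p1 == p2) && ((p1.1 : nat) + p1.2 + p2.1 + p2.2 == s))
   = \sum_(p1 : subgrp n m) nat_of_bool ((p1.1 : nat) + p1.2 + p1.1 + p1.2 == s).
    apply: eq_bigr => p1 _; rewrite (bigD1 p1) //= eqxx big1 ?addn0 //.
    by move=> p2 /negbTE; rewrite eq_sym => ->.
  by rewrite /dg pair_bigA.
have E3 : T4 n m s = \sum_(p1 : subgrp n m) \sum_(p2 : subgrp n m)
   nat_of_bool ([&& (p1.1 : nat) <= p2.1, (p1.2 : nat) <= p2.2 &
         (p1.1 : nat) + p1.2 + p2.1 + p2.2 == s]).
  rewrite /T4 pair_bigA; apply: eq_bigr => p1 _; rewrite pair_bigA; apply: eq_bigr => p2 _ /=.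
  by rewrite andbA.
rewrite E1 E2 E3 -big_split; apply: eq_bigr => p1 _; rewrite -big_split; apply: eq_bigr => p2 _ /=.
case: p1 p2 => [a x] [b y] /=; rewrite xpair_eqE -!val_eqE /=; lia.
Qed.

Lemma dg_odd n m s : odd s -> dg n m s = 0.
Proof. move=> Ho; rewrite /dg big1 // => a _; rewrite big1 // => x _; lia. Qed.

Lemma dg_ev n m : m <= n -> ~~ odd (n + m) -> dg n m (n + m) = m.+1.
Proof.
move=> Hmn Ho; rewrite /dg exchange_big /=.
rewrite (eq_bigr (fun _ => 1)) ?sum_nat_const ?card_ord ?muln1 //.
move=> x _; have Hx := ltn_ord x.
rewrite (eq_bigr (fun a : 'I_n.+1 => nat_of_bool (a + 0 == (n + m) %/ 2 - x))).
  rewrite sum_eqc; lia.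
move=> a _; lia.
Qed.

Theorem lemma7p11 (n m : nat) :
  2 <= m -> m <= n -> ~~ odd (n + m) ->
  ((SR n m)%:Z - (DR n m)%:Z = (uphalf m)%:Z)%R.
Proof.
move=> Hm Hmn Ho.
rewrite /SR /DR (negbTE Ho).
have H1 := card_R n m (n + m - 1).
have H2 := card_R n m (n + m).
rewrite !T4_c in H1 H2.
rewrite dg_odd in H1; last by lia.
rewrite dg_ev in H2 => //.
have H3 := offd m ((n - m) %/ 2) (ltnW Hm).
have E : m + 2 * ((n - m) %/ 2) = n by lia.
have E2 : 2 * m + 2 * ((n - m) %/ 2) = n + m by lia.
rewrite E E2 in H3.
have U : uphalf m = m.+1 %/ 2 by rewrite uphalfE divn2.
have K : Rcard n m (n + m - 1) = Rcard n m (n + m) + uphalf m by lia.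
rewrite K PoszD.
lia.
Qed.
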